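(* Let $A\in\mathbb{C}^{D\times D}$, let $T>0$, $t\in[0,T]$, and $u_0\in\mathbb{C}^D$. Suppose $A$ admits the Cartesian decomposition $$A=L+iH,\qquad L\equiv\frac{A+A^\dagger}{2}\succeq 0,\qquad H\equiv\frac{A-A^\dagger}{2i}.$$ Then the solution $\ket{u(t)}=e^{-At}\ket{u_0}$ of $\frac{\mathrm{d}u}{\mathrm{d}t}=-Au$, $u(0)=u_0$, admits the continuous-discrete variable LCHS representation $$\ket{u(t)}=(\bra{\phi}_{\rm osc}\otimes\mathbb I_q)\,e^{-it(\hat{x}\otimes L+\mathbb I_{\rm osc}\otimes H)}\,(\ket{\psi}_{\rm osc}\otimes\ket{u_0}_q),$$ where the oscillator states $\ket{\psi}_{\rm osc}=\int_{\mathbb R}\psi(x)\ket{x}\,\mathrm{d}x$ and $\ket{\phi}_{\rm osc}=\int_{\mathbb R}\phi(x)\ket{x}\,\mathrm{d}x$ satisfy $$\phi^*(x)\psi(x)=\frac{f(x)}{1-ix}\equiv g(x)\quad\text{for all }x\in\mathbb R,$$ with $f$ an LCHS kernel function.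
   Context: The oscillator is a single bosonic mode with Hilbert space $L^2(\mathbb R)$; $\hat x$ is its position quadrature with generalized eigenbasis $\{\ket{x}\}_{x\in\mathbb R}$, $\hat x=\int_{\mathbb R}x\ket{x}\bra{x}\,\mathrm{d}x$, $\braket{x'|x}=\delta(x-x')$. The qubit register is $\mathbb{C}^D$ and $\mathbb I_q$, $\mathbb I_{\rm osc}$ denote identities. An LCHS kernel function $f$ (in the sense of the linear combination of Hamiltonian simulation method) is a function on $\mathbb R$ such that, with $g(k)=f(k)/(1-ik)$, the identity $e^{-t(L+iH)}=\int_{\mathbb R}g(k)\,e^{-it(kL+H)}\,\mathrm{d}k$ holds for all Hermitian $L\succeq0$, Hermitian $H$, and $t\ge0$; an example is $g(k)=\frac{e^{2^\beta}}{2\pi(1-ik)e^{(1+ik)^\beta}}$ with $\beta\in(0,1)$ (principal branch). *)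

(* Defs.v *)
From HB Require Import structures.
From mathcomp Require Import all_boot all_order all_algebra.
From mathcomp Require Import all_classical all_reals all_analysis.
From mathcomp Require Import complex.
Set Implicit Arguments. Unset Strict Implicit. Unset Printing Implicit Defensive.
Import Order.TTheory GRing.Theory Num.Theory.
Import numFieldNormedType.Exports.
Local Open Scope ring_scope.
Local Open Scope complex_scope.

Section LCHSDefs.
Variable R : realType.
Local Notation C := (R[i]).

Definition reC (z : C) : R := complex.Re z.
Definition imC (z : C) : R := complex.Im z.

Definition limC (u : nat -> C) : C :=
  (limn (fun n => reC (u n))) +i* (limn (fun n => imC (u n))).

Definition expm (D : nat) (M : 'M[C]_D) : 'M[C]_D :=
  \matrix_(i, j) limC (fun n => (\sum_(k < n) ((k`!)%:R)^-1 *: (M ^+ k)) i j).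

Definition adjmx (m n : nat) (M : 'M[C]_(m, n)) : 'M[C]_(n, m) :=
  map_mx (fun z => z^*) M^T.

Definition hermitian (D : nat) (M : 'M[C]_D) : Prop := adjmx M = M.

Definition psd (D : nat) (M : 'M[C]_D) : Prop :=
  hermitian M /\ forall v : 'cV[C]_D, 0 <= (adjmx v *m M *m v) 0 0.

Definition Cintegrable (h : R -> C) : Prop :=
  (lebesgue_measure : set R -> \bar R).-integrable setT (fun x => (reC (h x))%:E) /\
  (lebesgue_measure : set R -> \bar R).-integrable setT (fun x => (imC (h x))%:E).

Definition Cint (h : R -> C) : C :=
  (Rintegral (lebesgue_measure : set R -> \bar R) setT (fun x => reC (h x)))
  +i* (Rintegral (lebesgue_measure : set R -> \bar R) setT (fun x => imC (h x))).

Definition L2fun (psi : R -> C) : Prop :=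
  measurable_fun setT (fun x => reC (psi x)) /\
  measurable_fun setT (fun x => imC (psi x)) /\
  (lebesgue_measure : set R -> \bar R).-integrable setT
     (fun x => (reC (psi x) ^+ 2 + imC (psi x) ^+ 2)%:E).

Definition lchs_g (f : R -> C) (k : R) : C := f k / (1 - 'i * k%:C).

Definition LCHS_kernel (f : R -> C) : Prop :=
  forall (D : nat) (L H : 'M[C]_D) (t : R),
    psd L -> hermitian H -> 0 <= t ->
    forall i j,
      Cintegrable (fun k => lchs_g f k * expm (- ('i * t%:C) *: (k%:C *: L + H)) i j) /\
      Cint (fun k => lchs_g f k * expm (- ('i * t%:C) *: (k%:C *: L + H)) i j)
      = expm (- t%:C *: (L + 'i *: H)) i j.

(* Oscillator (x) qubit-register space L^2(R) (x) C^D is identified with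
   L^2(R; C^D): a state is a function x |-> Psi(x) in C^D. *)

Definition tens_state (D : nat) (psi : R -> C) (u0 : 'cV[C]_D) : R -> 'cV[C]_D :=
  fun x => psi x *: u0.

(* e^{-it(xhat (x) L + I (x) H)}: the generator is decomposable in the
   position representation (xhat acts as multiplication by x on |x>), so the
   unitary acts on the fibre over x by e^{-it(xL+H)}. *)
Definition osc_evol (D : nat) (t : R) (L H : 'M[C]_D) (Psi : R -> 'cV[C]_D)
  : R -> 'cV[C]_D :=
  fun x => expm (- ('i * t%:C) *: (x%:C *: L + H)) *m Psi x.

Definition bra_osc (D : nat) (phi : R -> C) (Psi : R -> 'cV[C]_D) : 'cV[C]_D :=
  \col_(i < D) Cint (fun x => (phi x)^* * Psi x i 0).

End LCHSDefs.

(* Main.v *)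
Require Import Defs.
From HB Require Import structures.
From mathcomp Require Import all_boot all_order all_algebra.
From mathcomp Require Import all_classical all_reals all_analysis.
From mathcomp Require Import complex.
From mathcomp Require Import ring lra.
Import Order.TTheory GRing.Theory Num.Theory.
Local Open Scope ring_scope.
Local Open Scope complex_scope.

Section Helpers.
Variable R : realType.
Local Notation C := (R[i]).
Local Notation mu := (lebesgue_measure : set R -> \bar R).

Let lm : set R -> \bar R := lebesgue_measure.
Lemma lm0 : lm set0 = 0%E. Proof. exact: measure0. Qed.
Lemma lmge0 : forall A, (0 <= lm A)%E. Proof. move=> A; exact: measure_ge0. Qed.
Lemma lmsa : semi_sigma_additive lm.
Proof. exact: (@measure_semi_sigma_additive _ _ _ (@lebesgue_measure R)). Qed.
Definition lebR : measure R R :=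
  HB.pack lm (isMeasure.Build _ R R lm lm0 lmge0 lmsa).

Local Notation lT := (@lebesgue_measure R).

Lemma toT (f : R -> \bar R) : mu.-integrable setT f -> lT.-integrable [set: measurableTypeR R] f.
Proof.
move=> h.
have mphi : measurable_fun [set: R] (id : R -> measurableTypeR R).
  move=> _ Y mY; rewrite setTI; exact mY.
have mf : @measurable_fun _ _ (measurableTypeR R) (measurable_realfun.constructive_ereal_extended__canonical__measurable_structure_SigmaRing R) setT f.
  move/integrableP: h => [h _]; intros mT Y mY; exact (h mT Y mY).
have := @integrable_pushforward _ _ R (measurableTypeR R) R id mphi lebR setT f mf h measurableT.
intro h2; exact h2.
Qed.

Definition CiT (h : R -> C) : Prop :=
  lT.-integrable [set: measurableTypeR R] (fun x : R => (reC (h x))%:E) /\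
  lT.-integrable [set: measurableTypeR R] (fun x : R => (imC (h x))%:E).

Lemma CiT_of h : Cintegrable h -> CiT h.
Proof. move=> [a b]; exact (conj (toT _ a) (toT _ b)). Qed.

Lemma int_lin (a b : R) (f g : R -> R) :
  lT.-integrable [set: measurableTypeR R] (fun x => (f x)%:E) ->
  lT.-integrable [set: measurableTypeR R] (fun x => (g x)%:E) ->
  lT.-integrable [set: measurableTypeR R] (fun x => (a * f x + b * g x)%:E).
Proof.
move=> hf hg.
have := integrableD measurableT (integrableZl measurableT a hf) (integrableZl measurableT b hg).
apply: eq_integrable => // x _ /=; by rewrite -EFinD -!EFinM.
Qed.

Lemma Cint_mulc (h : R -> C) (c : C) : CiT h ->
  CiT (fun x => h x * c) /\ Cint (fun x => h x * c) = Cint h * c.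
Proof.
case: c => cr ci [hr hi].
have eR x : reC (h x * (cr +i* ci)) = cr * reC (h x) + (- ci) * imC (h x).
  by rewrite /reC /imC; case: (h x) => a b /=; rewrite mulNr; lra.
have eI x : imC (h x * (cr +i* ci)) = ci * reC (h x) + cr * imC (h x).
  by rewrite /reC /imC; case: (h x) => a b /=; lra.
split.
  split.
    have := int_lin cr (- ci) _ _ hr hi; apply: eq_integrable => // x _; by rewrite eR.
  have := int_lin ci cr _ _ hr hi; apply: eq_integrable => // x _; by rewrite eI.
rewrite /Cint.
under eq_Rintegral do rewrite eR.
under [X in _ +i* X]eq_Rintegral do rewrite eI.
rewrite !RintegralD //; last 4 first.
- exact: (integrableZl _ _ hr).
- exact: (integrableZl _ _ hi).
- exact: (integrableZl _ _ hr).
- exact: (integrableZl _ _ hi).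
rewrite !RintegralZl //=; congr (_ +i* _); lra.
Qed.

Lemma Cint_add (h1 h2 : R -> C) : CiT h1 -> CiT h2 ->
  CiT (fun x => h1 x + h2 x) /\
  Cint (fun x => h1 x + h2 x) = Cint h1 + Cint h2.
Proof.
move=> [r1 i1] [r2 i2].
have eR x : reC (h1 x + h2 x) = 1 * reC (h1 x) + 1 * reC (h2 x).
  by rewrite /reC; case: (h1 x) => a b; case: (h2 x) => c d /=; lra.
have eI x : imC (h1 x + h2 x) = 1 * imC (h1 x) + 1 * imC (h2 x).
  by rewrite /imC; case: (h1 x) => a b; case: (h2 x) => c d /=; lra.
split.
  split.
    have := int_lin 1 1 _ _ r1 r2; apply: eq_integrable => // x _; by rewrite eR.
  have := int_lin 1 1 _ _ i1 i2; apply: eq_integrable => // x _; by rewrite eI.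
rewrite /Cint.
under eq_Rintegral do rewrite eR !mul1r.
under [X in _ +i* X]eq_Rintegral do rewrite eI !mul1r.
by rewrite !RintegralD.
Qed.

Lemma Cint0 : CiT (fun _ : R => (0 : C)) /\ Cint (fun _ : R => (0 : C)) = 0.
Proof.
split; first by split; exact: integrable0.
by rewrite /Cint /reC /imC /= !Rintegral_cst // !mul0r.
Qed.

Lemma Cint_sum (I : Type) (s : seq I) (F : I -> R -> C) :
  (forall i, CiT (F i)) ->
  CiT (fun x => \sum_(i <- s) F i x) /\
  Cint (fun x => \sum_(i <- s) F i x) = \sum_(i <- s) Cint (F i).
Proof.
move=> hF; elim: s => [|a s [IHi IHe]].
  rewrite big_nil; under eq_fun do rewrite big_nil; exact: Cint0.
have [h1 h2] := Cint_add _ _ (hF a) IHi.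
rewrite big_cons; under eq_fun do rewrite big_cons.
by split => //; rewrite h2 IHe.
Qed.

Lemma adjmxD D (M N : 'M[C]_D) : adjmx (M + N) = adjmx M + adjmx N.
Proof. by apply/matrixP => i j; rewrite !mxE rmorphD. Qed.
Lemma adjmxN D (M : 'M[C]_D) : adjmx (- M) = - adjmx M.
Proof. by apply/matrixP => i j; rewrite !mxE rmorphN. Qed.
Lemma adjmxZ D (c : C) (M : 'M[C]_D) : adjmx (c *: M) = c^* *: adjmx M.
Proof. by apply/matrixP => i j; rewrite !mxE rmorphM. Qed.
Lemma adjmxK D (M : 'M[C]_D) : adjmx (adjmx M) = M.
Proof. by apply/matrixP => i j; rewrite !mxE conjcK. Qed.

Lemma conj2i : (((2%:R * 'i)^-1 : C)^*) = - (2%:R * 'i)^-1.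
Proof.
rewrite conjc_inv -invrN; congr (_^-1).
rewrite (rmorphM (@conjc R)) (rmorph_nat (@conjc R)).
rewrite -mulrN; congr (_ * _).
by rewrite -[RHS]/(Complex (-0) (-1)) oppr0.
Qed.

Lemma conj2i' : Num.conj ((2%:R * Num.imaginary)^-1 : R[i]) = - (2%:R * Num.imaginary)^-1.
Proof. exact: conj2i. Qed.

End Helpers.
Arguments CiT {R}. Arguments CiT_of {R}. Arguments Cint_mulc {R}. Arguments Cint_sum {R}. Arguments conj2i' {R}.

Theorem theorem1 (R : realType) (D : nat) (A : 'M[R[i]]_D) (T t : R)
  (u0 : 'cV[R[i]]_D) (f psi phi : R -> R[i]) :
  let L := (2%:R)^-1 *: (A + adjmx A) in
  let H := (2%:R * 'i)^-1 *: (A - adjmx A) in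
  0 < T -> 0 <= t -> t <= T ->
  psd L ->
  LCHS_kernel f ->
  L2fun psi -> L2fun phi ->
  (forall x : R, (phi x)^* * psi x = lchs_g f x) ->
  expm (- t%:C *: A) *m u0 =
  bra_osc phi (osc_evol t L H (tens_state psi u0)).
Proof.
move=> L H _ t0 _ pL hK _ _ hg.
have i0 : ('i : R[i]) != 0.
  by apply/eqP => /(congr1 (fun z => complex.Im z)) /= /eqP; rewrite oner_eq0.
have two0 : (2%:R : R[i]) != 0 by rewrite pnatr_eq0.
have hH : adjmx H = H.
  rewrite /H adjmxZ adjmxD adjmxN adjmxK conj2i'.
  by rewrite scaleNr -scalerN opprB.
have hA : A = L + Num.imaginary *: H.
  apply/matrixP => a b; rewrite /L /H !mxE.
  by field; exact: i0.
rewrite {1}hA; apply/matrixP => i j; rewrite (ord1 j) !mxE.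
pose F k := fun x : R => lchs_g f x * expm (- (Num.imaginary * t%:C) *: (x%:C *: L + H)) i k * u0 k 0.
have -> : (fun x : R => (phi x)^* * osc_evol t L H (tens_state psi u0) x i 0) =
          (fun x => \sum_(k < D) F k x).
  apply: funext => x; rewrite /osc_evol /tens_state !mxE mulr_sumr.
  apply: eq_bigr => k _; rewrite /F !mxE -hg; ring.
have hF k : CiT (F k) /\ Cint (F k) = expm (- t%:C *: (L + Num.imaginary *: H)) i k * u0 k 0.
  have [h1 h2] := hK D L H t pL hH t0 i k.
  have [h3 h4] := Cint_mulc _ (u0 k 0) (CiT_of _ h1).
  by split; [exact: h3 | rewrite /F h4 h2].
have [_ ->] := Cint_sum _ (index_enum _) F (fun k => (hF k).1).
by apply: eq_bigr => k _; rewrite (hF k).2.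
Qed.
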